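(* Let $n\ge1$ and $\alpha^1,\dots,\alpha^n\in\mathrm{ord}$. It is impossible that $\alpha^i<\alpha^1,\dots,\alpha^n$ holds for every $i\in\{1,\dots,n\}$.
   Context: Work constructively. Let $\mathfrak F$ be a set of index sets containing $\mathbb N$ and each $\mathbb N_k=\{n\in\mathbb N:n<k\}$ ($k\ge0$), closed (up to isomorphism) under finitely enumerated subsets, sets of finitely enumerated subsets, and disjoint unions indexed by elements of $\mathfrak F$. A finitely enumerated subset of $A$ is one given by a map $\mathbb N_k\to A$; write $F\subseteq_f I$. The set $\mathrm{ord}$ is inductively generated by $\underline 0$ and, for every family $(\alpha_i)_{i\in I}$ with $I\in\mathfrak F$, $\alpha_i\in\mathrm{ord}$, an element $\mathrm S(\alpha_i)_{i\in I}$; for such $\alpha$, $I_\alpha=I$ and $\alpha_i$ are its definitional subordinals; $I_{\underline 0}=\emptyset$. For a finite list $F$ in $I_\alpha$, $\alpha_F$ is the list of the $\alpha_i$, $i\in F$. Relations between an element and a nonempty finite list, by simultaneous induction: $\alpha\le\beta^1,\dots,\beta^m$ means $\alpha_i<\beta^1,\dots,\beta^m$ for all $i\in I_\alpha$; $\alpha<\beta^1,\dots,\beta^m$ means there exist $F_1\subseteq_f I_{\beta^1},\dots,F_m\subseteq_f I_{\beta^m}$, not all empty, with $\alpha\le\beta^1_{F_1},\dots,\beta^m_{F_m}$ (concatenated list). *)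

(* Defs.v *)
From mathcomp Require Import all_boot.
Set Implicit Arguments. Unset Strict Implicit. Unset Printing Implicit Defensive.

Definition iso (A B : Type) : Type :=
  { f : A -> B & { g : B -> A & (forall a, g (f a) = a) /\ (forall b, f (g b) = b) } }.

(* A set F of index sets is presented as a type of codes U with decoding El. *)
Record index_universe (U : Type) (El : U -> Type) : Type := {
  iu_nat  : { u : U & iso (El u) nat };
  iu_Nk   : forall k : nat, { u : U & iso (El u) 'I_k };
  iu_fsub : forall (u : U) (k : nat) (f : 'I_k -> El u),
              { v : U & iso (El v) { x : El u | exists j, f j = x } };
  iu_fsubs : forall u : U, { v : U & iso (El v) { k : nat & 'I_k -> El u } };
  iu_sigma : forall (u : U) (g : El u -> U),
              { v : U & iso (El v) { i : El u & El (g i) } }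
}.

Section Ord.
Variables (U : Type) (El : U -> Type).

Inductive ord : Type :=
| ord0 : ord
| ordS : forall u : U, (El u -> ord) -> ord.

Definition idx (a : ord) : Type :=
  match a with ord0 => Empty_set | @ordS u _ => El u end.

Definition sub (a : ord) : idx a -> ord :=
  match a as a0 return idx a0 -> ord with
  | ord0 => fun e => match e with end
  | @ordS u f => f
  end.

(* A choice of finitely enumerated subsets F_1 ⊆_f I_{β^1}, ..., F_m ⊆_f I_{β^m},
   each given by an enumeration (a finite list of indices). *)
Fixpoint choices (bs : seq ord) : Type :=
  match bs with
  | [::] => unit
  | b :: bs' => (seq (idx b) * choices bs')%type
  end.

Fixpoint apply_ch (bs : seq ord) : choices bs -> seq ord :=
  match bs as bs0 return choices bs0 -> seq ord with
  | [::] => fun _ => [::]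
  | b :: bs' => fun c => map (@sub b) c.1 ++ @apply_ch bs' c.2
  end.

Fixpoint ch_nonempty (bs : seq ord) : choices bs -> Prop :=
  match bs as bs0 return choices bs0 -> Prop with
  | [::] => fun _ => False
  | b :: bs' => fun c => c.1 <> [::] \/ @ch_nonempty bs' c.2
  end.

Fixpoint ord_le (a : ord) (bs : seq ord) : Prop :=
  match a with
  | ord0 => True
  | @ordS u f => forall i : El u,
      exists c : choices bs, ch_nonempty c /\ ord_le (f i) (apply_ch c)
  end.

Definition ord_lt (a : ord) (bs : seq ord) : Prop :=
  exists c : choices bs, ch_nonempty c /\ ord_le a (apply_ch c).

End Ord.

(* Main.v *)
Require Import Defs.
From mathcomp Require Import all_boot.
From Stdlib Require Import Setoid.

Section Proof.
Variables (U : Type) (El : U -> Type).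
Local Notation ord := (ord El).

Fixpoint inl (x : ord) (s : seq ord) : Prop :=
  match s with [::] => False | y :: s' => y = x \/ inl x s' end.

Lemma inl_app x s t : inl x (s ++ t) <-> inl x s \/ inl x t.
Proof. elim: s => [|a s IH] /=; first by intuition.
rewrite IH; intuition. Qed.

Definition child (y z : ord) := exists i : idx z, y = @sub _ _ z i.
Definition children (Y zs : seq ord) :=
  forall y, inl y Y -> exists z, inl z zs /\ child y z.
Definition incl (A B : seq ord) := forall x, inl x A -> inl x B.

Lemma ch_ne (bs : seq ord) (c : choices bs) : ch_nonempty c <-> apply_ch c <> [::].
Proof.
elim: bs c => [|b bs IH] c /=; first by split => // H; apply: H.
case: c => s c /=; case: s => [|a s] /=.
- rewrite (IH c); split; [by case | by right].
- by split => // _; left.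
Qed.

Lemma ch_children (bs : seq ord) (c : choices bs) : children (apply_ch c) bs.
Proof.
elim: bs c => [|b bs IH] c y /=; first by [].
case: c => s c /=.
rewrite inl_app => -[].
- elim: s => [|a s IHs] //= [<-|H]; first by exists b; split; [left|exists a].
  by apply: IHs.
- by move=> /(IH c) [z [Hz Hc]]; exists z; split; [right|].
Qed.

Fixpoint ch_empty (bs : seq ord) : choices bs :=
  match bs as bs0 return choices bs0 with
  | [::] => tt
  | b :: bs' => ([::], ch_empty bs')
  end.

Lemma ch_add (bs : seq ord) (b : ord) (i : idx b) : inl b bs -> forall c : choices bs,
  exists c' : choices bs, incl (apply_ch c) (apply_ch c') /\ inl (sub i) (apply_ch c').
Proof.
elim: bs => [|b' bs IH] //= Hb [s c].
case: Hb => [E|Hb].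
- subst b'. exists (i :: s, c) => /=; split; last by left.
  by move=> x Hx /=; right.
- have [c' [H1 H2]] := IH Hb c. exists (s, c') => /=; split.
  + by move=> x; rewrite !inl_app; intuition.
  + by rewrite inl_app; right.
Qed.

Lemma realize (Y L : seq ord) : children L Y -> exists c : choices Y, incl L (apply_ch c).
Proof.
elim: L => [|a L IH] HL.
- by exists (ch_empty Y).
- have [|c Hc] := IH; first by move=> y Hy; apply: HL; right.
  have [b [Hb [i ->]]] := HL a (or_introl erefl).
  have [c' [H1 H2]] := @ch_add Y b i Hb c.
  exists c' => x /= [<-|Hx] //. by apply: H1; apply: Hc.
Qed.

Lemma incl_ne A B : A <> [::] -> incl A B -> B <> [::].
Proof. case: A => [|a A] // _ H E; have := H a (or_introl erefl); by rewrite E. Qed.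

Lemma mono (x : ord) (ys Y : seq ord) : ord_le x ys -> incl ys Y -> ord_le x Y.
Proof.
elim: x ys Y => [|u f IH] ys Y //= H HY i.
have [c [Hne Hle]] := H i.
have Hch : children (apply_ch c) Y.
  move=> y /(@ch_children ys c) [z [Hz Hc]]; exists z; split => //; exact: HY.
have [c' Hc'] := @realize _ _ Hch.
exists c'; split.
  apply (proj2 (@ch_ne _ c')); apply: (@incl_ne _ _ _ Hc'); exact: (proj1 (@ch_ne _ c) Hne).
exact: (IH i _ _ Hle Hc').
Qed.

Lemma lt_iff (x : ord) (zs : seq ord) : ord_lt x zs <->
  exists L, L <> [::] /\ children L zs /\ ord_le x L.
Proof.
split.
- move=> [c [Hne Hle]]; exists (apply_ch c); split; first exact: (proj1 (@ch_ne _ c) Hne).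
  split => //; exact: (@ch_children zs c).
- move=> [L [Hne [Hch Hle]]]. have [c Hc] := @realize _ _ Hch.
  exists c; split; first exact: (proj2 (@ch_ne _ c) (@incl_ne _ _ Hne Hc)).
  exact: (@mono _ _ _ Hle Hc).
Qed.

Lemma le_sub (z : ord) (W : seq ord) (y : ord) : ord_le z W -> child y z -> ord_lt y W.
Proof. case: z => [|u f] /= H [i ->] //; exact: H. Qed.

Definition rel (Y zs : seq ord) := Y <> [::] /\ children Y zs.

Lemma acc_incl A B : Acc rel A -> incl B A -> Acc rel B.
Proof.
move=> [HA] HBA; constructor => W [Hne HW]; apply: HA; split => // y Hy.
have [z [Hz Hc]] := HW y Hy; exists z; split => //; exact: HBA.
Qed.

Lemma acc_nil : Acc rel [::].
Proof.
constructor => -[|y Y] [Hne H]; first by case: Hne.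
have [z [[] _]] := H y (or_introl erefl).
Qed.

Definition good (z : ord) := forall zs, Acc rel zs -> Acc rel (z :: zs).

Lemma good_app Y1 T : (forall y, inl y Y1 -> good y) -> Acc rel T -> Acc rel (Y1 ++ T).
Proof.
elim: Y1 => [|a Y1 IH] /= H HT; first exact: HT.
apply: (H a (or_introl erefl)).
apply: IH HT => y Hy; apply: H; right; exact: Hy.
Qed.

Lemma good_step (z : ord) : (forall i : idx z, good (@sub _ _ z i)) -> good z.
Proof.
move=> Hg zs Hacc; constructor => Y [Hne HY].
suff [Y1 [Y2 [H1 [H2 H3]]]] : exists Y1 Y2, (forall y, inl y Y1 -> good y) /\
   children Y2 zs /\ incl Y (Y1 ++ Y2).
  apply: (@acc_incl _ _ _ H3); apply: (@good_app Y1 Y2); first exact: H1.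
  case E: Y2 => [|a Y2']; first exact: acc_nil.
  case: Hacc => Hacc; apply: Hacc; split; [by [] | by rewrite -E].
clear Hne; elim: Y HY => [|a Y IH] HY.
- by exists [::], [::]; split => //; split => // y.
- have [|Y1 [Y2 [H1 [H2 H3]]]] := IH; first by move=> y Hy; apply: HY; right.
  have [b [[Eb|Hb] [i Ei]]] := HY a (or_introl erefl).
  + subst b a. exists (sub i :: Y1), Y2; split.
    * by move=> y /= [<-|Hy]; [apply: Hg|apply: H1].
    * split => // x /= [<-|Hx]; first by left.
      by right; apply: H3.
  + exists Y1, (a :: Y2); split => //; split.
    * move=> y /= [<-|Hy]; first by exists b; split => //; exists i.
      exact: H2.
    * move=> x /= [<-|Hx]; first by rewrite inl_app; right; left.
      have := H3 x Hx; rewrite !inl_app /= => -[H|H]; [by left | by right; right].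
Qed.

Lemma good_all z : good z.
Proof. elim: z => [|u f IH]; apply: good_step => //= -[]. Qed.

Lemma acc_all zs : Acc rel zs.
Proof. elim: zs => [|z zs IH]; [exact: acc_nil | exact: good_all]. Qed.

Lemma collect (xs zs : seq ord) : (forall x, inl x xs -> ord_lt x zs) ->
  exists Y, (xs <> [::] -> Y <> [::]) /\ children Y zs /\
    forall x, inl x xs -> ord_le x Y.
Proof.
elim: xs => [|a xs IH] H.
- by exists [::]; split => //; split => // y.
- have [|Y [_ [HY1 HY2]]] := IH; first by move=> x Hx; apply: H; right.
  have [L [HL1 [HL2 HL3]]] := (lt_iff a zs).1 (H a (or_introl erefl)).
  exists (L ++ Y); split; first by case: L HL1 {HL2 HL3}.
  split.
  + by move=> y; rewrite inl_app => -[/HL2|/HY1].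
  + move=> x /= [<-|Hx]; apply: mono; try eassumption.
    * by move=> w Hw; rewrite inl_app; left.
    * by apply: HY2.
    * by move=> w Hw; rewrite inl_app; right.
Qed.

Lemma mainQ (zs : seq ord) : Acc rel zs -> zs <> [::] -> forall xs,
  (forall z, inl z zs -> ord_lt z xs) -> (forall x, inl x xs -> ord_lt x zs) -> False.
Proof.
elim=> {}zs _ IH Hne xs H1 H2.
have Hxs : xs <> [::].
  case: zs Hne H1 {IH H2} => [|z zs] // _ H1 E.
  have [c [Hc _]] := H1 z (or_introl erefl). by move: c Hc; rewrite E.
have [Y [HY1 [HY2 HY3]]] := @collect xs zs H2.
have [W [HW1 [HW2 HW3]]] := @collect zs xs H1.
apply: (IH Y); first (by split => //; apply: HY1); first by apply: HY1.
- move=> y /HY2 [z [Hz Hc]]; exact: (@le_sub z W y (HW3 z Hz) Hc).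
- move=> w /HW2 [x [Hx Hc]]; exact: (@le_sub x Y w (HY3 x Hx) Hc).
Qed.

End Proof.

Lemma inl_map (U : Type) (El : U -> Type) (T : Type) (f : T -> ord El) (s : seq T) (x : ord El) :
  @inl U El x (map f s) -> exists y, x = f y.
Proof. elim: s => [|a s IH] //= [<-|H]; [by exists a | exact: IH]. Qed.

Theorem lemma4p5 (U : Type) (El : U -> Type) (HF : index_universe El)
  (n : nat) (hn : 1 <= n) (alpha : 'I_n -> ord El) :
  ~ (forall i : 'I_n, ord_lt (alpha i) [seq alpha j | j <- enum 'I_n]).
Proof.
move=> H.
have Hne : [seq alpha j | j <- enum 'I_n] <> [::].
  move=> E; have := congr1 size E; rewrite size_map size_enum_ord /= => En; by rewrite En in hn.
apply: (@mainQ U El _ (@acc_all U El _) Hne (map alpha (enum (ordinal n)))) => x /inl_map [i ->]; exact: H.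
Qed.
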